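(* Let $c_0,c_1>0$ be sufficiently large numerical constants, let $K\ge2$ be a fixed integer, and define $\beta_1=T^{-c_0}$, $\beta_t=\frac{c_1\log T}{T}\min\{\beta_1(1+\frac{c_1\log T}{T})^t,1\}$ for $2\le t\le T$, $\alpha_t=1-\beta_t$, $\overline\alpha_t=\prod_{i=1}^t\alpha_i$. For $2\le t\le T$ let $\tau_{t,0}=1-\overline\alpha_t$, $\tau_{t,K-1}=1-\overline\alpha_{t-1}$, $\tau_{t,i}=\tau_{t,0}-\frac{i}{K-1}(\tau_{t,0}-\tau_{t,K-1})$ for $0\le i\le K-1$, let $\psi_i(\tau)=\prod_{i'\ne i}(\tau-\tau_{t,i'})/\prod_{i'\ne i}(\tau_{t,i}-\tau_{t,i'})$ (products over $0\le i'\le K-1$, $i'\ne i$) and $\gamma_{t,i}(\tau')=\int_{\tau'}^{\tau_{t,0}}\psi_i(\tau)d\tau$. Then for $T$ large enough: (a) $\alpha_t\ge 1-\frac{c_1\log T}{T}\ge\frac12$ for $1\le t\le T$; (b) $\frac12\frac{1-\alpha_t}{1-\overline\alpha_t}\le\frac12\frac{1-\alpha_t}{\alpha_t-\overline\alpha_t}\le\frac{1-\alpha_t}{1-\overline\alpha_{t-1}}\le\frac{4c_1\log T}{T}$ for $2\le t\le T$; (c) $1\le\frac{1-\overline\alpha_t}{1-\overline\alpha_{t-1}}\le1+\frac{4c_1\log T}{T}$ for $2\le t\le T$; (d) $\overline\alpha_T\le T^{-c_2}$ for a sufficiently large constant $c_2$; (e) $\frac{\overline\alpha_{t+1}}{1-\overline\alpha_{t+1}}\le\frac{\overline\alpha_t}{1-\overline\alpha_t}\le\frac{4\overline\alpha_{t+1}}{1-\overline\alpha_{t+1}}$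 for $1\le t<T$; (f) $\Big|\frac{\tau_{t,i_1}-\tau_{t,i_2}}{\tau_{t,i_3}(1-\tau_{t,i_4})}\Big|\le 8c_1\frac{\log T}{T}$ for $2\le t\le T$ and $0\le i_1,i_2,i_3,i_4\le K-1$; (g) $|\gamma_{t,i}(\tau_{t,j})|\le 2^K(\tau_{t,0}-\tau_{t,j})$ for all $0\le i,j\le K-1$; (h) $1-\tau_{t,i}\asymp 1-\tau_{t,j}$ and $\tau_{t,i}\asymp\tau_{t,j}$ for all $0\le i,j\le K-1$, $2\le t\le T$.
   Context: $a\asymp b$ means $c\,b\le a\le C\,b$ for positive numerical constants $c,C$ independent of $T$, $t$, $i$, $j$. *)

(* Defs.v *)
From Stdlib Require Import Reals Lra Lia Arith.
From Coquelicot Require Import Coquelicot.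
Open Scope R_scope.

Fixpoint prodR (n : nat) (f : nat -> R) : R :=
  match n with
  | O => 1
  | S m => prodR m f * f m
  end.

Definition stepL (T : nat) (c1 : R) : R := c1 * ln (INR T) / INR T.

(* beta_1 = T^{-c0};  beta_t = (c1 log T / T) * min{beta_1 (1 + c1 log T/T)^t, 1} for t >= 2
   (the value at t = 0 is never used) *)
Definition beta (T : nat) (c0 c1 : R) (t : nat) : R :=
  if (t <=? 1)%nat then Rpower (INR T) (- c0)
  else stepL T c1 * Rmin (Rpower (INR T) (- c0) * (1 + stepL T c1) ^ t) 1.

Definition alpha (T : nat) (c0 c1 : R) (t : nat) : R := 1 - beta T c0 c1 t.

Definition alphabar (T : nat) (c0 c1 : R) (t : nat) : R :=
  prodR t (fun k => alpha T c0 c1 (S k)).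

Definition tau (K T : nat) (c0 c1 : R) (t i : nat) : R :=
  let t0 := 1 - alphabar T c0 c1 t in
  let tK := 1 - alphabar T c0 c1 (t - 1) in
  t0 - INR i / INR (K - 1) * (t0 - tK).

Definition psi (K T : nat) (c0 c1 : R) (t i : nat) (x : R) : R :=
  prodR K (fun i' => if (i' =? i)%nat then 1 else x - tau K T c0 c1 t i')
  / prodR K (fun i' => if (i' =? i)%nat then 1
                       else tau K T c0 c1 t i - tau K T c0 c1 t i').

Definition gamma (K T : nat) (c0 c1 : R) (t i : nat) (x : R) : R :=
  RInt (psi K T c0 c1 t i) x (tau K T c0 c1 t 0).

(* Main.v *)
Require Import Defs.
From Stdlib Require Import Reals.
From Coquelicot Require Import Coquelicot.
Open Scope R_scope.
From Stdlib Require Import Lra Lia Arith.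

Lemma prodR_ext n f g : (forall k, (k < n)%nat -> f k = g k) -> prodR n f = prodR n g.
Proof.
  induction n; intros H; simpl; auto.
  rewrite IHn by (intros; apply H; lia). rewrite H by lia. reflexivity.
Qed.

Lemma prodR_front n f : prodR (S n) f = f 0%nat * prodR n (fun k => f (S k)).
Proof.
  induction n; simpl in *. ring. rewrite IHn. simpl. ring.
Qed.

Lemma prodR_rev n f : prodR n f = prodR n (fun k => f (n - 1 - k)%nat).
Proof.
  induction n. reflexivity.
  rewrite (prodR_front n (fun k => f (S n - 1 - k)%nat)). simpl prodR at 1. rewrite IHn.
  replace (S n - 1 - 0)%nat with n by lia. rewrite Rmult_comm. f_equal.
  apply prodR_ext. intros k Hk. f_equal. lia.
Qed.

Lemma prodR_abs n f : Rabs (prodR n f) = prodR n (fun k => Rabs (f k)).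
Proof.
  induction n; simpl. apply Rabs_R1. rewrite Rabs_mult, IHn. reflexivity.
Qed.

Lemma prodR_le n f g : (forall k, (k < n)%nat -> 0 <= f k <= g k) ->
  0 <= prodR n f <= prodR n g.
Proof.
  induction n; intros H; simpl. lra.
  destruct IHn as [H1 H2]. intros; apply H; lia.
  destruct (H n) as [H3 H4]. lia.
  split. apply Rmult_le_pos; auto.
  apply Rmult_le_compat; auto.
Qed.

Lemma prodR_nonneg n f : (forall k, (k < n)%nat -> 0 <= f k) -> 0 <= prodR n f.
Proof.
  induction n; intros H; simpl. lra. apply Rmult_le_pos. apply IHn; intros; apply H; lia. apply H; lia.
Qed.

Lemma prodR_add a b f : prodR (a + b) f = prodR a f * prodR b (fun k => f (a + k)%nat).
Proof.
  induction b. simpl. rewrite Nat.add_0_r. ring.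
  rewrite Nat.add_succ_r. simpl. rewrite IHb. ring.
Qed.

Lemma prodR_fact n : prodR n (fun k => INR (S k)) = INR (fact n).
Proof.
  induction n. reflexivity.
  change (prodR (S n) (fun k => INR (S k))) with (prodR n (fun k => INR (S k)) * INR (S n)).
  rewrite IHn. change (fact (S n)) with (S n * fact n)%nat.
  rewrite mult_INR. ring.
Qed.

Lemma prodR_pos n f : (forall k, (k < n)%nat -> 0 < f k) -> 0 < prodR n f.
Proof.
  induction n; intros H; simpl. lra. apply Rmult_lt_0_compat. apply IHn; intros; apply H; lia. apply H; lia.
Qed.

Lemma prodR_aux n i h a : (n <= i)%nat ->
  prodR n (fun k => if (k =? i)%nat then 1 else h * a k) = h ^ n * prodR n (fun k => if (k =? i)%nat then 1 else a k).
Proof.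
  induction n; intros H; simpl. ring.
  rewrite IHn by lia. destruct (Nat.eqb_spec n i). lia. ring.
Qed.

Lemma prodR_hexcl n i h a : (i < n)%nat ->
  prodR n (fun k => if (k =? i)%nat then 1 else h * a k) = h ^ (n - 1) * prodR n (fun k => if (k =? i)%nat then 1 else a k).
Proof.
  induction n; intros H. lia.
  simpl prodR. destruct (Nat.eqb_spec n i).
  - subst. rewrite prodR_aux by lia. replace (S i - 1)%nat with i by lia. ring.
  - rewrite IHn by lia. replace (S n - 1)%nat with (S (n - 1)) by lia. simpl. ring.
Qed.

Lemma num_bound n : forall s i, 0 <= s <= INR n ->
  prodR (S n) (fun k => if (k =? i)%nat then 1 else Rabs (INR k - s)) <= INR (fact n).
Proof.
  induction n; intros s i Hs.
  - assert (s = 0) by (simpl in Hs; lra). subst s. change (prodR 1 ?g) with (1 * g 0%nat). cbv beta. destruct (0 =? i)%nat; simpl; try lra. replace (0 - 0) with 0 by lra. rewrite Rabs_R0. lra.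
  - assert (H1 : forall s i, 0 <= s <= INR n ->
      prodR (S (S n)) (fun k => if (k =? i)%nat then 1 else Rabs (INR k - s)) <= INR (fact (S n))).
    { intros s' i' Hs'. 
      change (prodR (S (S n)) ?g) with (prodR (S n) g * g (S n)). cbv beta.
      change (fact (S n)) with (S n * fact n)%nat. rewrite mult_INR.
      rewrite (Rmult_comm (INR (S n))).
      apply Rmult_le_compat.
      - apply prodR_nonneg. intros. destruct (k =? i')%nat. lra. apply Rabs_pos.
      - destruct (S n =? i')%nat. lra. apply Rabs_pos.
      - apply IHn; auto.
      - destruct (S n =? i')%nat. rewrite S_INR; pose proof (pos_INR n); lra.
        rewrite Rabs_right; rewrite S_INR in *; lra. }
    destruct (Rle_dec s (INR n)) as [Hle|Hgt].
    + apply H1; lra.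
    + destruct n as [|n].
      * simpl in *. change (fact 1) with 1%nat. simpl INR.
        assert (forall k, (k < 2)%nat -> 0 <= (if (k =? i)%nat then 1 else Rabs (INR k - s)) <= 1).
        { intros k Hk. destruct (k =? i)%nat. lra. split. apply Rabs_pos.
          destruct k as [|[|]]; simpl; try lia; apply Rabs_le; lra. }
        destruct (H 0%nat) as [A B]. lia. destruct (H 1%nat) as [C D]. lia.
        simpl in A, B, C, D. 
        replace (1 * (if (0 =? i)%nat then 1 else Rabs (0 - s)) * (if (1 =? i)%nat then 1 else Rabs (1 - s))) with
          ((if (0 =? i)%nat then 1 else Rabs (0 - s)) * (if (1 =? i)%nat then 1 else Rabs (1 - s))) by ring.
        replace 1 with (1*1) at 5 by ring. apply Rmult_le_compat; lra.
      * rewrite prodR_rev.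
        set (i' := if (i <=? S (S n))%nat then (S (S n) - i)%nat else i).
        rewrite (prodR_ext _ _ (fun k => if (k =? i')%nat then 1 else Rabs (INR k - (INR (S (S n)) - s)))).
        { apply H1. rewrite !S_INR in *. pose proof (pos_INR n). lra. }
        intros k Hk. replace (S (S (S n)) - 1 - k)%nat with (S (S n) - k)%nat by lia.
        assert (E : ((S (S n) - k =? i) = (k =? i'))%nat).
        { unfold i'. destruct (Nat.leb_spec i (S (S n)));
          destruct (Nat.eqb_spec (S (S n) - k) i); destruct (Nat.eqb_spec k (S (S n) - i));
          destruct (Nat.eqb_spec k i); auto; lia. }
        rewrite E. destruct (k =? i')%nat. reflexivity.
        rewrite minus_INR by lia. rewrite <- Rabs_Ropp. f_equal. ring.
Qed.

Lemma den_eq n i : (i <= n)%nat ->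
  prodR (S n) (fun k => if (k =? i)%nat then 1 else Rabs (INR k - INR i)) = INR (fact i) * INR (fact (n - i)).
Proof.
  intros H. replace (S n) with (S i + (n - i))%nat by lia. rewrite prodR_add.
  f_equal.
  - change (prodR (S i) ?g) with (prodR i g * g i). cbv beta. rewrite Nat.eqb_refl, Rmult_1_r.
    rewrite prodR_rev, <- prodR_fact. apply prodR_ext. intros k Hk.
    destruct (Nat.eqb_spec (i - 1 - k) i). lia.
    rewrite minus_INR by lia. rewrite minus_INR by lia. rewrite (S_INR k). change (INR 1) with 1.
    rewrite Rabs_left1. ring. pose proof (pos_INR k). lra.
  - rewrite <- prodR_fact. apply prodR_ext. intros k Hk.
    destruct (Nat.eqb_spec (S i + k) i). lia.
    rewrite plus_INR, !S_INR. rewrite Rabs_right. ring. pose proof (pos_INR k). lra.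
Qed.

Lemma sum_ge_term f N i : (forall k, (k <= N)%nat -> 0 <= f k) -> (i <= N)%nat -> f i <= sum_f_R0 f N.
Proof.
  revert i. induction N; intros i H Hi.
  - assert (i = 0%nat) by lia. subst. simpl. lra.
  - simpl. destruct (Nat.eq_dec i (S N)).
    + subst. assert (0 <= sum_f_R0 f N).
      { assert (f 0%nat <= sum_f_R0 f N) by (apply IHN; [intros; apply H; lia | lia]). assert (0 <= f 0%nat) by (apply H; lia). lra. }
      lra.
    + assert (f i <= sum_f_R0 f N) by (apply IHN; [intros; apply H; lia | lia]).
      assert (0 <= f (S N)) by (apply H; lia). lra.
Qed.

Lemma binom_bound n i : (i <= n)%nat -> INR (fact n) <= 2 ^ n * (INR (fact i) * INR (fact (n - i))).
Proof.
  intros H.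
  assert (Hp : 0 < INR (fact i) * INR (fact (n - i))).
  { apply Rmult_lt_0_compat; apply lt_0_INR; apply lt_O_fact. }
  assert (HC : Binomial.C n i <= 2 ^ n).
  { replace 2 with (1 + 1) by ring. rewrite binomial.
    apply (sum_ge_term (fun k => Binomial.C n k * 1 ^ k * 1 ^ (n - k))) in H.
    rewrite !pow1, !Rmult_1_r in H. exact H.
    intros k _. rewrite !pow1, !Rmult_1_r. unfold Binomial.C.
    apply Rle_mult_inv_pos. apply pos_INR.
    apply Rmult_lt_0_compat; apply lt_0_INR; apply lt_O_fact. }
  unfold Binomial.C in HC.
  apply (Rmult_le_compat_r (INR (fact i) * INR (fact (n - i)))) in HC; [|lra].
  unfold Rdiv in HC. rewrite Rmult_assoc, Rinv_l, Rmult_1_r in HC by lra. exact HC.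
Qed.

Lemma lag_bound n i (t0 h x : R) : 0 < h -> (i <= n)%nat -> t0 - INR n * h <= x <= t0 ->
  Rabs (prodR (S n) (fun k => if (k =? i)%nat then 1 else x - (t0 - INR k * h)) /
        prodR (S n) (fun k => if (k =? i)%nat then 1 else (t0 - INR i * h) - (t0 - INR k * h))) <= 2 ^ n.
Proof.
  intros Hh Hi Hx. set (s := (t0 - x) / h).
  assert (Hs : 0 <= s <= INR n).
  { unfold s. split. apply Rdiv_le_0_compat; lra.
    apply Rmult_le_reg_r with h; auto. unfold Rdiv. rewrite Rmult_assoc, Rinv_l by lra. lra. }
  rewrite (prodR_ext _ _ (fun k => if (k =? i)%nat then 1 else h * (INR k - s))).
  2:{ intros k _. destruct (k =? i)%nat; auto. unfold s. field. lra. }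
  rewrite (prodR_ext _ (fun k => if (k =? i)%nat then 1 else (t0 - INR i * h) - (t0 - INR k * h))
     (fun k => if (k =? i)%nat then 1 else h * (INR k - INR i))).
  2:{ intros k _. destruct (k =? i)%nat; auto. ring. }
  rewrite !prodR_hexcl by lia.
  assert (Hhp : 0 < h ^ (S n - 1)) by (apply pow_lt; lra).
  assert (Hd : 0 < Rabs (prodR (S n) (fun k => if (k =? i)%nat then 1 else INR k - INR i))).
  { rewrite prodR_abs. rewrite (prodR_ext _ _ (fun k => if (k =? i)%nat then 1 else Rabs (INR k - INR i))).
    rewrite den_eq by lia. apply Rmult_lt_0_compat; apply lt_0_INR; apply lt_O_fact.
    intros k _. destruct (k =? i)%nat; auto. apply Rabs_R1. }
  replace (h ^ (S n - 1) * prodR (S n) (fun k => if (k =? i)%nat then 1 else INR k - s) /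
     (h ^ (S n - 1) * prodR (S n) (fun k => if (k =? i)%nat then 1 else INR k - INR i)))
    with (prodR (S n) (fun k => if (k =? i)%nat then 1 else INR k - s) /
     prodR (S n) (fun k => if (k =? i)%nat then 1 else INR k - INR i)).
  2:{ field. split. intro E; rewrite E, Rabs_R0 in Hd; lra. lra. }
  rewrite Rabs_div. 2:{ intro E; rewrite E, Rabs_R0 in Hd; lra. }
  apply Rle_div_l; auto.
  rewrite !prodR_abs.
  rewrite (prodR_ext _ (fun k => Rabs (if (k =? i)%nat then 1 else INR k - s)) (fun k => if (k =? i)%nat then 1 else Rabs (INR k - s))).
  rewrite (prodR_ext _ (fun k => Rabs (if (k =? i)%nat then 1 else INR k - INR i)) (fun k => if (k =? i)%nat then 1 else Rabs (INR k - INR i))).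
  rewrite den_eq by lia.
  eapply Rle_trans. apply num_bound; auto. apply binom_bound; auto.
  all: intros k _; destruct (k =? i)%nat; auto; apply Rabs_R1.
Qed.

Lemma b1_pos T c0 : 0 < Rpower (INR T) (- c0).
Proof. unfold Rpower. apply exp_pos. Qed.

Lemma Rmin_pos_le1 a : 0 < a -> 0 < Rmin a 1 <= 1.
Proof. intros. unfold Rmin. destruct (Rle_dec a 1); lra. Qed.

Lemma beta_bounds T c0 c1 t : 0 < stepL T c1 <= 1/8 -> Rpower (INR T) (- c0) <= stepL T c1 ->
  0 < beta T c0 c1 t <= stepL T c1.
Proof.
  intros HL Hb. pose proof (b1_pos T c0). unfold beta. destruct (t <=? 1)%nat. lra.
  assert (0 < Rpower (INR T) (- c0) * (1 + stepL T c1) ^ t).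
  { apply Rmult_lt_0_compat. auto. apply pow_lt. lra. }
  destruct (Rmin_pos_le1 _ H0). set (L := stepL T c1) in *. set (m := Rmin _ 1) in *. split; nra.
Qed.

Lemma beta_ge2 T c0 c1 t : (2 <= t)%nat ->
  beta T c0 c1 t = stepL T c1 * Rmin (Rpower (INR T) (- c0) * (1 + stepL T c1) ^ t) 1.
Proof. intros H. unfold beta. destruct (Nat.leb_spec t 1). lia. reflexivity. Qed.

Lemma ab_S T c0 c1 t : alphabar T c0 c1 (S t) = alphabar T c0 c1 t * alpha T c0 c1 (S t).
Proof. reflexivity. Qed.

Lemma ab_1 T c0 c1 : alphabar T c0 c1 1 = 1 - Rpower (INR T) (- c0).
Proof. unfold alphabar, alpha, beta. simpl. ring. Qed.

Lemma alpha_bounds T c0 c1 t : 0 < stepL T c1 <= 1/8 -> Rpower (INR T) (- c0) <= stepL T c1 ->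
  1 - stepL T c1 <= alpha T c0 c1 t < 1 /\ 1/2 <= alpha T c0 c1 t.
Proof. intros HL Hb. pose proof (beta_bounds T c0 c1 t HL Hb). unfold alpha. lra. Qed.

Lemma ab_bounds T c0 c1 t : 0 < stepL T c1 <= 1/8 -> Rpower (INR T) (- c0) <= stepL T c1 ->
  0 < alphabar T c0 c1 t <= 1.
Proof.
  intros HL Hb. induction t. change (alphabar T c0 c1 0) with 1. lra. rewrite ab_S.
  pose proof (alpha_bounds T c0 c1 (S t) HL Hb). split. apply Rmult_lt_0_compat; lra.
  replace 1 with (1*1) by ring. apply Rmult_le_compat; lra.
Qed.

Lemma ab_le1 T c0 c1 t : 0 < stepL T c1 <= 1/8 -> Rpower (INR T) (- c0) <= stepL T c1 ->
  (1 <= t)%nat -> alphabar T c0 c1 t <= 1 - Rpower (INR T) (- c0).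
Proof.
  intros HL Hb Ht. induction t. lia. destruct t. rewrite ab_1. lra.
  rewrite ab_S. pose proof (alpha_bounds T c0 c1 (S (S t)) HL Hb).
  pose proof (ab_bounds T c0 c1 (S t) HL Hb). specialize (IHt ltac:(lia)).
  pose proof (b1_pos T c0). nra.
Qed.

Lemma min_step b q n : 0 < b -> 1 <= q -> Rmin (b * q ^ S n) 1 <= q * Rmin (b * q ^ n) 1.
Proof.
  intros Hb Hq. unfold Rmin. simpl.
  destruct (Rle_dec (b * q ^ n) 1); destruct (Rle_dec (b * (q * q ^ n)) 1); nra.
Qed.

Lemma key T c0 c1 t : 0 < stepL T c1 <= 1/8 -> Rpower (INR T) (- c0) <= stepL T c1 ->
  (1 <= t)%nat ->
  Rmin (Rpower (INR T) (- c0) * (1 + stepL T c1) ^ S t) 1 <= 4 * (1 - alphabar T c0 c1 t).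
Proof.
  intros HL Hb Ht. pose proof (b1_pos T c0) as Hb1.
  set (L := stepL T c1) in *. set (b1 := Rpower (INR T) (- c0)) in *.
  induction t. lia. destruct t.
  - rewrite ab_1. fold b1. 
    assert (Rmin (b1 * (1 + L) ^ 2) 1 <= b1 * (1 + L) ^ 2) by apply Rmin_l.
    assert ((1 + L) ^ 2 <= 4) by (simpl; nra). nra.
  - specialize (IHt ltac:(lia)).
    rewrite ab_S. unfold alpha. rewrite beta_ge2 by lia. fold L b1.
    pose proof (ab_bounds T c0 c1 (S t) HL Hb).
    set (u := 1 - alphabar T c0 c1 (S t)) in *.
    assert (Hu : 0 <= u < 1) by (unfold u; lra).
    set (m := Rmin (b1 * (1 + L) ^ S (S t)) 1) in *.
    assert (Hm : 0 < m <= 1). { apply Rmin_pos_le1. apply Rmult_lt_0_compat; auto. apply pow_lt; lra. }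
    assert (E : 1 - alphabar T c0 c1 (S t) * (1 - L * m) = u + (1 - u) * L * m) by (unfold u; ring).
    rewrite E.
    destruct (Rle_dec (1/4) u).
    + assert (Rmin (b1 * (1 + L) ^ S (S (S t))) 1 <= 1) by apply Rmin_r.
      assert (0 <= (1 - u) * L * m). { apply Rmult_le_pos. apply Rmult_le_pos; lra. lra. }
      lra.
    + pose proof (min_step b1 (1 + L) (S (S t)) Hb1 ltac:(lra)). fold m in H0.
      assert (0 <= (3 - 4 * u) * (L * m)). { apply Rmult_le_pos. lra. apply Rmult_le_pos; lra. }
      nra.
Qed.

Lemma frac_mono p' p d d' : 0 <= p' <= p -> 0 < d <= d' -> p' / d' <= p / d.
Proof.
  intros Hp Hd. unfold Rdiv. apply Rle_trans with (p * / d').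
  apply Rmult_le_compat_r. left; apply Rinv_0_lt_compat; lra. lra.
  apply Rmult_le_compat_l. lra. apply Rinv_le_contravar; lra.
Qed.

Lemma setup T c0 c1 t' : 0 < stepL T c1 <= 1/8 -> Rpower (INR T) (- c0) <= stepL T c1 -> (1 <= t')%nat ->
  let a := alphabar T c0 c1 t' in let be := beta T c0 c1 (S t') in
  0 < a < 1 /\ 0 < be /\ be <= stepL T c1 /\ be <= 4 * stepL T c1 * (1 - a) /\
  alpha T c0 c1 (S t') = 1 - be /\ alphabar T c0 c1 (S t') = a * (1 - be).
Proof.
  intros HL Hb Ht a be.
  pose proof (ab_bounds T c0 c1 t' HL Hb). pose proof (ab_le1 T c0 c1 t' HL Hb Ht).
  pose proof (b1_pos T c0). pose proof (beta_bounds T c0 c1 (S t') HL Hb).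
  pose proof (key T c0 c1 t' HL Hb Ht).
  unfold be. rewrite beta_ge2 by lia. fold a in H, H0, H3.
  assert (0 <= stepL T c1 * Rmin (Rpower (INR T) (- c0) * (1 + stepL T c1) ^ S t') 1 <= stepL T c1 * (4 * (1 - a))).
  { split. rewrite <- beta_ge2 by lia. lra. apply Rmult_le_compat_l; lra. }
  rewrite <- beta_ge2 in * by lia.
  repeat split; try lra. all: rewrite ab_S; reflexivity.
Qed.

Lemma part_b T c0 c1 t : 0 < stepL T c1 <= 1/8 -> Rpower (INR T) (- c0) <= stepL T c1 -> (2 <= t)%nat ->
  let al := alpha T c0 c1 in let ab := alphabar T c0 c1 in
       1/2 * ((1 - al t) / (1 - ab t)) <= 1/2 * ((1 - al t) / (al t - ab t)) /\
       1/2 * ((1 - al t) / (al t - ab t)) <= (1 - al t) / (1 - ab (t - 1)%nat) /\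
       (1 - al t) / (1 - ab (t - 1)%nat) <= 4 * stepL T c1.
Proof.
  intros HL Hb Ht al ab. destruct t as [|t']. lia. replace (S t' - 1)%nat with t' by lia.
  destruct (setup T c0 c1 t' HL Hb ltac:(lia)) as (Ha & Hbe & HbeL & Hk & Eal & Eab).
  unfold al, ab. rewrite Eal, Eab.
  set (a := alphabar T c0 c1 t') in *. set (be := beta T c0 c1 (S t')) in *.
  set (L := stepL T c1) in *.
  replace (1 - (1 - be)) with be by ring.
  split; [|split].
  - apply Rmult_le_compat_l. lra. apply frac_mono. lra. split; nra.
  - replace (1 / 2 * (be / (1 - be - a * (1 - be)))) with ((be / (1 - a)) * / (2 * (1 - be))).
    2:{ replace (1 - be - a * (1 - be)) with ((1 - a) * (1 - be)) by ring. field. split; apply Rgt_not_eq; lra. }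
    rewrite <- (Rmult_1_r (be / (1 - a))) at 2. apply Rmult_le_compat_l.
    apply Rdiv_le_0_compat; lra. rewrite <- Rinv_1. apply Rinv_le_contravar; lra.
  - apply Rle_div_l. lra. lra.
Qed.

Lemma part_c T c0 c1 t : 0 < stepL T c1 <= 1/8 -> Rpower (INR T) (- c0) <= stepL T c1 -> (2 <= t)%nat ->
  let ab := alphabar T c0 c1 in
       1 <= (1 - ab t) / (1 - ab (t - 1)%nat) /\
       (1 - ab t) / (1 - ab (t - 1)%nat) <= 1 + 4 * stepL T c1.
Proof.
  intros HL Hb Ht ab. destruct t as [|t']. lia. replace (S t' - 1)%nat with t' by lia.
  destruct (setup T c0 c1 t' HL Hb ltac:(lia)) as (Ha & Hbe & HbeL & Hk & Eal & Eab).
  unfold ab. rewrite Eab.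
  set (a := alphabar T c0 c1 t') in *. set (be := beta T c0 c1 (S t')) in *.
  set (L := stepL T c1) in *.
  split.
  - apply Rle_div_r. lra. nra.
  - apply Rle_div_l. lra. nra.
Qed.

Lemma part_e T c0 c1 t : 0 < stepL T c1 <= 1/8 -> Rpower (INR T) (- c0) <= stepL T c1 -> (1 <= t)%nat ->
  let ab := alphabar T c0 c1 in
       ab (S t) / (1 - ab (S t)) <= ab t / (1 - ab t) /\
       ab t / (1 - ab t) <= 4 * (ab (S t) / (1 - ab (S t))).
Proof.
  intros HL Hb Ht ab.
  destruct (setup T c0 c1 t HL Hb ltac:(lia)) as (Ha & Hbe & HbeL & Hk & Eal & Eab).
  unfold ab. rewrite Eab.
  set (a := alphabar T c0 c1 t) in *. set (be := beta T c0 c1 (S t)) in *.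
  set (L := stepL T c1) in *.
  split.
  - apply frac_mono. split; nra. split; nra.
  - replace (a / (1 - a)) with ((2 * a) / (2 * (1 - a))) by (field; lra).
    replace (4 * (a * (1 - be) / (1 - a * (1 - be)))) with ((4 * (a * (1 - be))) / (1 - a * (1 - be))) by (field; nra).
    apply frac_mono. split; nra. split; nra.
Qed.

Lemma r_bounds K i : (2 <= K)%nat -> (i <= K - 1)%nat -> 0 <= INR i / INR (K - 1) <= 1.
Proof.
  intros HK Hi. assert (0 < INR (K - 1)) by (apply lt_0_INR; lia).
  split. apply Rdiv_le_0_compat. apply pos_INR. auto.
  apply Rle_div_l. auto. rewrite Rmult_1_l. apply le_INR. auto.
Qed.

Lemma tau_eq K T c0 c1 t' i :
  tau K T c0 c1 (S t') i = 1 - alphabar T c0 c1 t' * (1 - beta T c0 c1 (S t')) -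
    INR i / INR (K - 1) * (alphabar T c0 c1 t' * beta T c0 c1 (S t')).
Proof. unfold tau. replace (S t' - 1)%nat with t' by lia. rewrite ab_S. unfold alpha. ring. Qed.

Lemma part_f K T c0 c1 t i1 i2 i3 i4 : (2 <= K)%nat ->
  0 < stepL T c1 <= 1/8 -> Rpower (INR T) (- c0) <= stepL T c1 -> (2 <= t)%nat ->
  (i1 <= K - 1)%nat -> (i2 <= K - 1)%nat -> (i3 <= K - 1)%nat -> (i4 <= K - 1)%nat ->
  let tau := tau K T c0 c1 in
  Rabs ((tau t i1 - tau t i2) / (tau t i3 * (1 - tau t i4))) <= 8 * stepL T c1.
Proof.
  intros HK HL Hb Ht H1 H2 H3 H4 tau0. destruct t as [|t']. lia.
  destruct (setup T c0 c1 t' HL Hb ltac:(lia)) as (Ha & Hbe & HbeL & Hk & Eal & Eab).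
  unfold tau0. rewrite !tau_eq.
  pose proof (r_bounds K i1 HK H1). pose proof (r_bounds K i2 HK H2).
  pose proof (r_bounds K i3 HK H3). pose proof (r_bounds K i4 HK H4).
  set (a := alphabar T c0 c1 t') in *. set (be := beta T c0 c1 (S t')) in *.
  set (L := stepL T c1) in *.
  set (r1 := INR i1 / INR (K - 1)) in *. set (r2 := INR i2 / INR (K - 1)) in *.
  set (r3 := INR i3 / INR (K - 1)) in *. set (r4 := INR i4 / INR (K - 1)) in *.
  assert (Hab : 0 < a * be) by nra.
  assert (Hd3 : 1 - a <= 1 - a * (1 - be) - r3 * (a * be)) by nra.
  assert (Hd4 : a * (1 - be) <= 1 - (1 - a * (1 - be) - r4 * (a * be))) by nra.
  assert (Hpos : 0 < (1 - a) * (a * (1 - be))) by (apply Rmult_lt_0_compat; nra).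
  rewrite Rabs_div. 2:{ apply Rgt_not_eq. apply Rmult_lt_0_compat; nra. }
  rewrite (Rabs_right (_ * _)). 2:{ left. apply Rmult_lt_0_compat; nra. }
  apply Rle_trans with ((a * be) / ((1 - a) * (a * (1 - be)))).
  - apply frac_mono. split. apply Rabs_pos.
    replace (1 - a * (1 - be) - r1 * (a * be) - (1 - a * (1 - be) - r2 * (a * be))) with ((r2 - r1) * (a * be)) by ring.
    rewrite Rabs_mult, (Rabs_right (a * be)) by lra.
    assert (Rabs (r2 - r1) <= 1) by (apply Rabs_le; lra). nra.
    split. auto. apply Rmult_le_compat; nra.
  - apply Rle_div_l. auto. assert (be * a <= 4 * L * (1 - a) * a) by (apply Rmult_le_compat_r; lra). assert (0 <= 4 * L * (1 - a) * a) by (apply Rmult_le_pos; [apply Rmult_le_pos|]; lra). nra.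
Qed.

Lemma part_h K T c0 c1 t i j : (2 <= K)%nat ->
  0 < stepL T c1 <= 1/8 -> Rpower (INR T) (- c0) <= stepL T c1 -> (2 <= t)%nat ->
  (i <= K - 1)%nat -> (j <= K - 1)%nat ->
  let tau := tau K T c0 c1 in
       1/2 * (1 - tau t j) <= 1 - tau t i /\ 1 - tau t i <= 2 * (1 - tau t j) /\
       1/2 * tau t j <= tau t i /\ tau t i <= 2 * tau t j.
Proof.
  intros HK HL Hb Ht Hi Hj tau0. destruct t as [|t']. lia.
  destruct (setup T c0 c1 t' HL Hb ltac:(lia)) as (Ha & Hbe & HbeL & Hk & Eal & Eab).
  unfold tau0. rewrite !tau_eq.
  pose proof (r_bounds K i HK Hi). pose proof (r_bounds K j HK Hj).
  set (a := alphabar T c0 c1 t') in *. set (be := beta T c0 c1 (S t')) in *.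
  set (L := stepL T c1) in *.
  set (r1 := INR i / INR (K - 1)) in *. set (r2 := INR j / INR (K - 1)) in *.
  assert (Hab : 0 < a * be) by nra.
  repeat split; nra.
Qed.

Lemma prodR_cont n (F : nat -> R -> R) z : (forall k, continuous (F k) z) ->
  continuous (fun x => prodR n (fun k => F k x)) z.
Proof.
  intros H. induction n; simpl.
  - apply continuous_const.
  - apply (continuous_mult (fun x => prodR n (fun k => F k x)) (F n)); auto.
Qed.

Lemma psi_cont K T c0 c1 t i z : continuous (psi K T c0 c1 t i) z.
Proof.
  unfold psi, Rdiv.
  apply (continuous_mult (fun x => prodR K (fun i' => if (i' =? i)%nat then 1 else x - tau K T c0 c1 t i'))
     (fun _ => / _)).
  - apply (prodR_cont K (fun i' x => if (i' =? i)%nat then 1 else x - tau K T c0 c1 t i')).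
    intros k. destruct (k =? i)%nat. apply continuous_const.
    apply (continuous_minus (fun x => x) (fun _ => tau K T c0 c1 t k)). apply continuous_id. apply continuous_const.
  - apply continuous_const.
Qed.

Lemma part_g K T c0 c1 t i j : (2 <= K)%nat ->
  0 < stepL T c1 <= 1/8 -> Rpower (INR T) (- c0) <= stepL T c1 -> (2 <= t)%nat ->
  (i <= K - 1)%nat -> (j <= K - 1)%nat ->
  Rabs (gamma K T c0 c1 t i (tau K T c0 c1 t j)) <= 2 ^ K * (tau K T c0 c1 t 0%nat - tau K T c0 c1 t j).
Proof.
  intros HK HL Hb Ht Hi Hj. destruct t as [|t']. lia.
  destruct (setup T c0 c1 t' HL Hb ltac:(lia)) as (Ha & Hbe & HbeL & Hk & Eal & Eab).
  set (n := (K - 1)%nat).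
  assert (Hn : 0 < INR n) by (apply lt_0_INR; unfold n; lia).
  set (a := alphabar T c0 c1 t') in *. set (be := beta T c0 c1 (S t')) in *.
  set (h := a * be / INR n). set (t0 := 1 - a * (1 - be)).
  assert (Hh : 0 < h) by (unfold h; apply Rdiv_lt_0_compat; nra).
  assert (Htau : forall k, tau K T c0 c1 (S t') k = t0 - INR k * h).
  { intros k. rewrite tau_eq. fold a be. unfold t0, h, n. field. fold n. lra. }
  assert (Hj' : INR j <= INR n) by (apply le_INR; auto).
  assert (H0 : tau K T c0 c1 (S t') 0 = t0) by (rewrite Htau; simpl; ring).
  unfold gamma. rewrite H0.
  apply Rle_trans with ((t0 - tau K T c0 c1 (S t') j) * 2 ^ n).
  - apply abs_RInt_le_const.
    + rewrite Htau. pose proof (pos_INR j). nra.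
    + apply (@ex_RInt_continuous R_CompleteNormedModule). intros. apply psi_cont.
    + intros x Hx. rewrite Htau in Hx.
      unfold psi. replace K with (S n) by (unfold n; lia).
      rewrite (prodR_ext _ (fun i' => if (i' =? i)%nat then 1 else x - tau (S n) T c0 c1 (S t') i')
        (fun k => if (k =? i)%nat then 1 else x - (t0 - INR k * h))).
      2:{ intros k _; replace (S n) with K by (unfold n; lia); rewrite ?Htau; reflexivity. }
      rewrite (prodR_ext _ (fun i' => if (i' =? i)%nat then 1 else tau (S n) T c0 c1 (S t') i - tau (S n) T c0 c1 (S t') i')
        (fun k => if (k =? i)%nat then 1 else (t0 - INR i * h) - (t0 - INR k * h))).
      2:{ intros k _; replace (S n) with K by (unfold n; lia); rewrite ?Htau; reflexivity. }
      apply lag_bound; auto. split; nra.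
  - rewrite Rmult_comm. apply Rmult_le_compat_r.
    rewrite Htau. pose proof (pos_INR j). nra.
    replace K with (S n) by (unfold n; lia). simpl. pose proof (pow_le 2 n ltac:(lra)). lra.
Qed.

Lemma exp_mono x y : x <= y -> exp x <= exp y.
Proof. intros H. destruct (Rle_lt_or_eq_dec _ _ H). left; apply exp_increasing; auto. subst; lra. Qed.

Lemma exp_pow' a n : exp a ^ n = exp (INR n * a).
Proof.
  induction n. simpl. rewrite Rmult_0_l, exp_0. reflexivity.
  simpl pow. rewrite IHn, <- exp_plus, S_INR. f_equal. ring.
Qed.

Lemma ln_ge1 x : 3 <= x -> 1 <= ln x.
Proof.
  intros H. rewrite <- (ln_exp 1). apply ln_le. apply exp_pos. pose proof exp_le_3. lra.
Qed.

Lemma T_large c1 : 0 < c1 -> exists T0 : nat, forall T, (T0 <= T)%nat ->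
  3 <= INR T /\ c1 * ln (INR T) / INR T <= 1/8.
Proof.
  intros Hc. destruct (INR_unbounded (256 * c1 * c1 + 3)) as [N HN]. exists N. intros T HT.
  apply le_INR in HT. set (x := INR T) in *.
  assert (Hx : 256 * c1 * c1 + 3 < x) by lra. split. nra.
  assert (Hs : 0 < sqrt x) by (apply sqrt_lt_R0; nra).
  assert (Hl : ln x <= 2 * sqrt x).
  { rewrite <- (sqrt_sqrt x) at 1 by nra. rewrite ln_mult by auto.
    pose proof (exp_ineq1_le (ln (sqrt x))). rewrite exp_ln in H by auto. lra. }
  assert (H16 : 16 * c1 <= sqrt x).
  { rewrite <- (sqrt_square (16 * c1)) by lra. apply sqrt_le_1_alt. nra. }
  apply Rle_div_l. nra.
  assert (c1 * ln x <= c1 * (2 * sqrt x)) by (apply Rmult_le_compat_l; lra).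
  assert (sqrt x * sqrt x = x) by (apply sqrt_sqrt; nra). nra.
Qed.

Lemma L_pos T c1 : 0 < c1 -> 3 <= INR T -> 0 < stepL T c1.
Proof.
  intros Hc HT. unfold stepL. pose proof (ln_ge1 _ HT). apply Rdiv_lt_0_compat; nra.
Qed.

Lemma b1_le_L T c0 c1 : 1 <= c0 -> 1 <= c1 -> 3 <= INR T -> Rpower (INR T) (- c0) <= stepL T c1.
Proof.
  intros H0 H1 HT. pose proof (ln_ge1 _ HT). unfold Rpower, stepL.
  apply Rle_trans with (exp (- ln (INR T))).
  apply exp_mono. nra. rewrite exp_Ropp, exp_ln by lra.
  unfold Rdiv. rewrite <- (Rmult_1_l (/ INR T)) at 1. apply Rmult_le_compat_r.
  left; apply Rinv_0_lt_compat; lra. nra.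
Qed.

Lemma ab_tail T c0 c1 k m L : 0 < stepL T c1 <= 1/8 -> Rpower (INR T) (- c0) <= stepL T c1 ->
  0 <= L <= 1 ->
  (forall t, (k < t <= k + m)%nat -> alpha T c0 c1 t <= 1 - L) ->
  alphabar T c0 c1 (k + m) <= (1 - L) ^ m.
Proof.
  intros HL Hb HL' H. induction m.
  - rewrite Nat.add_0_r. simpl. apply (ab_bounds T c0 c1 k HL Hb).
  - rewrite Nat.add_succ_r, ab_S. simpl.
    pose proof (alpha_bounds T c0 c1 (S (k + m)) HL Hb).
    pose proof (ab_bounds T c0 c1 (k + m) HL Hb).
    assert (alpha T c0 c1 (S (k + m)) <= 1 - L) by (apply H; lia).
    specialize (IHm ltac:(intros; apply H; lia)).
    rewrite Rmult_comm. apply Rmult_le_compat; lra.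
Qed.

Lemma part_d T c0 c1 c2 : 0 < c0 -> 4 * c0 <= c1 -> 2 * c2 <= c1 -> 3 <= INR T ->
  0 < stepL T c1 <= 1/8 -> Rpower (INR T) (- c0) <= stepL T c1 ->
  alphabar T c0 c1 T <= Rpower (INR T) (- c2).
Proof.
  intros Hc0 Hc1 Hc2 HT HL Hb. set (x := INR T) in *.
  pose proof (ln_ge1 _ HT) as Hln.
  assert (Hx : 0 < x) by lra.
  assert (HT3 : (3 <= T)%nat) by (apply INR_le; simpl; unfold x in HT; lra).
  set (L := stepL T c1) in *.
  assert (HLx : L = c1 * ln x / x) by reflexivity.
  assert (He : exp (L / 2) <= 1 + L).
  { pose proof (exp_ineq1_le (- (L / 2))).
    assert (exp (L / 2) * exp (- (L / 2)) = 1) by (rewrite <- exp_plus, Rplus_opp_r; apply exp_0).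
    pose proof (exp_pos (L / 2)). nra. }
  assert (Hbeta : forall t, (T < 2 * t)%nat -> alpha T c0 c1 t <= 1 - L).
  { intros t Ht. unfold alpha. rewrite beta_ge2 by lia. fold L.
    rewrite Rmin_right. lra.
    apply Rle_trans with (exp (- c0 * ln x) * exp (L / 2) ^ t).
    2:{ apply Rmult_le_compat_l. left; apply exp_pos. apply pow_incr. split. left; apply exp_pos. auto. }
    rewrite exp_pow', <- exp_plus, <- exp_0. apply exp_mono.
    assert (Htx : x <= 2 * INR t). { unfold x. replace 2 with (INR 2) by reflexivity. rewrite <- mult_INR. apply le_INR. lia. }
    rewrite HLx.
    replace (- c0 * ln x + INR t * (c1 * ln x / x / 2)) with (ln x * (c1 * (INR t / x) / 2 - c0)) by (field; lra).
    apply Rmult_le_pos. lra.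
    assert (1/2 <= INR t / x). { apply (Rle_div_r (1/2) (INR t) x). lra. lra. } nra. }
  destruct (Nat.Even_or_Odd T) as [[k Hk]|[k Hk]].
  - assert (E : T = (k + k)%nat) by lia.
    assert (H := ab_tail T c0 c1 k k L HL Hb ltac:(lra) ltac:(intros; apply Hbeta; lia)).
    rewrite <- E in H. eapply Rle_trans. apply H.
    assert (Hkx : x = 2 * INR k) by (unfold x; rewrite Hk, mult_INR; reflexivity).
    apply Rle_trans with (exp (- L) ^ k). apply pow_incr. split. lra. pose proof (exp_ineq1_le (- L)). lra.
    rewrite exp_pow'. unfold Rpower. apply exp_mono. rewrite HLx.
    replace (INR k * - (c1 * ln x / x)) with (- c1 * ln x / 2) by (rewrite Hkx; field; lra). nra.
  - assert (E : T = (k + S k)%nat) by lia.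
    assert (H := ab_tail T c0 c1 k (S k) L HL Hb ltac:(lra) ltac:(intros; apply Hbeta; lia)).
    rewrite <- E in H. eapply Rle_trans. apply H.
    assert (Hkx : x = 2 * INR k + 1) by (unfold x; rewrite Hk, plus_INR, mult_INR; reflexivity).
    apply Rle_trans with (exp (- L) ^ S k). apply pow_incr. split. lra. pose proof (exp_ineq1_le (- L)). lra.
    rewrite exp_pow'. unfold Rpower. apply exp_mono. rewrite HLx.
    assert (x / 2 <= INR (S k)) by (rewrite S_INR; lra).
    assert (0 <= c1 * ln x / x) by (apply Rdiv_le_0_compat; nra).
    apply Rle_trans with (x / 2 * - (c1 * ln x / x)). nra.
    replace (x / 2 * - (c1 * ln x / x)) with (- c1 * ln x / 2) by (field; lra). nra.
Qed.

Theorem lemma1 :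
  forall (K : nat), (2 <= K)%nat ->
  forall c2 : R,
  exists C0 : R, forall c0 : R, 0 < c0 -> C0 <= c0 ->
  exists C1 : R, forall c1 : R, 0 < c1 -> C1 <= c1 ->
  exists (T0 : nat) (cc CC : R), 0 < cc /\ 0 < CC /\
  forall T : nat, (T0 <= T)%nat ->
    let L := c1 * ln (INR T) / INR T in
    let al := alpha T c0 c1 in
    let ab := alphabar T c0 c1 in
    let tau := tau K T c0 c1 in
    (* (a) *)
    (forall t, (1 <= t <= T)%nat -> al t >= 1 - L /\ 1 - L >= 1/2) /\
    (* (b) *)
    (forall t, (2 <= t <= T)%nat ->
       1/2 * ((1 - al t) / (1 - ab t)) <= 1/2 * ((1 - al t) / (al t - ab t)) /\
       1/2 * ((1 - al t) / (al t - ab t)) <= (1 - al t) / (1 - ab (t - 1)%nat) /\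
       (1 - al t) / (1 - ab (t - 1)%nat) <= 4 * L) /\
    (* (c) *)
    (forall t, (2 <= t <= T)%nat ->
       1 <= (1 - ab t) / (1 - ab (t - 1)%nat) /\
       (1 - ab t) / (1 - ab (t - 1)%nat) <= 1 + 4 * L) /\
    (* (d) *)
    ab T <= Rpower (INR T) (- c2) /\
    (* (e) *)
    (forall t, (1 <= t < T)%nat ->
       ab (S t) / (1 - ab (S t)) <= ab t / (1 - ab t) /\
       ab t / (1 - ab t) <= 4 * (ab (S t) / (1 - ab (S t)))) /\
    (* (f) *)
    (forall t i1 i2 i3 i4, (2 <= t <= T)%nat ->
       (i1 <= K - 1)%nat -> (i2 <= K - 1)%nat ->
       (i3 <= K - 1)%nat -> (i4 <= K - 1)%nat ->
       Rabs ((tau t i1 - tau t i2) / (tau t i3 * (1 - tau t i4))) <= 8 * L) /\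
    (* (g) *)
    (forall t i j, (2 <= t <= T)%nat -> (i <= K - 1)%nat -> (j <= K - 1)%nat ->
       Rabs (gamma K T c0 c1 t i (tau t j)) <= 2 ^ K * (tau t 0%nat - tau t j)) /\
    (* (h) *)
    (forall t i j, (2 <= t <= T)%nat -> (i <= K - 1)%nat -> (j <= K - 1)%nat ->
       cc * (1 - tau t j) <= 1 - tau t i /\ 1 - tau t i <= CC * (1 - tau t j) /\
       cc * tau t j <= tau t i /\ tau t i <= CC * tau t j).
Proof.
  intros K HK c2. exists 1. intros c0 Hc0 HC0.
  exists (4 * c0 + 2 * Rabs c2 + 1). intros c1 Hc1 HC1.
  pose proof (Rabs_pos c2). pose proof (Rle_abs c2).
  destruct (T_large c1 Hc1) as [T0 HT0].
  exists T0, (1/2), 2. split. lra. split. lra.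
  intros T HT. destruct (HT0 T HT) as [H3 Hsm].
  assert (HL : 0 < stepL T c1 <= 1/8) by (split; [apply L_pos; auto | exact Hsm]).
  assert (Hb : Rpower (INR T) (- c0) <= stepL T c1) by (apply b1_le_L; lra).
  intros L al ab tau0.
  change L with (stepL T c1).
  split; [|split; [|split; [|split; [|split; [|split; [|split]]]]]].
  - intros t Ht. pose proof (alpha_bounds T c0 c1 t HL Hb). unfold al. lra.
  - intros t Ht. exact (part_b T c0 c1 t HL Hb ltac:(lia)).
  - intros t Ht. exact (part_c T c0 c1 t HL Hb ltac:(lia)).
  - apply part_d; auto; lra.
  - intros t Ht. exact (part_e T c0 c1 t HL Hb ltac:(lia)).
  - intros t i1 i2 i3 i4 Ht H1 H2 H4 H5. exact (part_f K T c0 c1 t i1 i2 i3 i4 HK HL Hb ltac:(lia) H1 H2 H4 H5).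
  - intros t i j Ht Hi Hj. exact (part_g K T c0 c1 t i j HK HL Hb ltac:(lia) Hi Hj).
  - intros t i j Ht Hi Hj. exact (part_h K T c0 c1 t i j HK HL Hb ltac:(lia) Hi Hj).
Qed.
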